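(* For every sequent $\Gamma\Rightarrow\Delta$ of $\mathtt{TPDL}$: if $\Gamma\Rightarrow\Delta$ is provable in the cyclic proof system $\mathtt{CGTPDL}$, then $M\models\Gamma\Rightarrow\Delta$ for every model $M$.
   Context: Fix sets $\mathsf{Prop}$ and $\mathsf{AtProg}$. $\mathtt{TPDL}$ formulas/programs: $\varphi ::= \bot \mid p \mid (\varphi\to\varphi) \mid [\pi]\varphi \mid [\pi]^{\leftarrow}\varphi$, $\pi ::= \alpha \mid \pi;\pi \mid \pi\cup\pi \mid \pi^{*} \mid \varphi?$. For a set $\Gamma$, $[\pi]\Gamma=\{[\pi]\varphi:\varphi\in\Gamma\}$, similarly $[\pi]^{\leftarrow}\Gamma$. A model is $M=(W,(R_\alpha),V)$, $W\neq\emptyset$, $R_\alpha\subseteq W\times W$, $V:W\to\mathcal P(\mathsf{Prop})$; $R_{\pi_0;\pi_1}$ composition, $R_{\pi_0\cup\pi_1}$ union, $R_{\pi^*}$ reflexive–transitive closure, $R_{\psi?}=\{(w,w):M,w\models\psi\}$; $M,w\not\models\bot$, $M,w\models p$ iff $p\in V(w)$, $\to$ classical, $M,w\models[\pi]\varphi$ iff $\varphi$ holds at all $v$ with $wR_\pi v$, $M,w\models[\pi]^{\leftarrow}\varphi$ iff $\varphi$ holds at all $v$ with $vR_\pi w$. A sequent $\Gamma\Rightarrow\Delta$ is a pair of finite sets of formulas; $M\models\Gamma\Rightarrow\Delta$ means at every state where all of $\Gamma$ hold some formula of $\Delta$ holds. Rules of $\mathtt{CGTPDL}$ (premises / conclusion):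 (Ax) / $\Gamma\Rightarrow\Delta$ with $\Gamma\cap\Delta\neq\emptyset$; ($\bot$) / $\Gamma,\bot\Rightarrow\Delta$; ($\to$L) $\Gamma\Rightarrow\varphi,\Delta$ and $\Gamma,\psi\Rightarrow\Delta$ / $\Gamma,\varphi\to\psi\Rightarrow\Delta$; ($\to$R) $\Gamma,\varphi\Rightarrow\psi,\Delta$ / $\Gamma\Rightarrow\varphi\to\psi,\Delta$; (Wk) $\Gamma\Rightarrow\Delta$ / $\Gamma'\Rightarrow\Delta'$ with $\Gamma\subseteq\Gamma',\Delta\subseteq\Delta'$; (Cut) $\Gamma\Rightarrow\varphi,\Delta$ and $\Gamma,\varphi\Rightarrow\Delta$ / $\Gamma\Rightarrow\Delta$; ($[\,]$) $\Gamma\Rightarrow\varphi,[\pi]^{\leftarrow}\Delta$ / $[\pi]\Gamma\Rightarrow[\pi]\varphi,\Delta$; ($[\,]^{\leftarrow}$) $\Gamma\Rightarrow\varphi,[\pi]\Delta$ / $[\pi]^{\leftarrow}\Gamma\Rightarrow[\pi]^{\leftarrow}\varphi,\Delta$; ($[;]$L) $\Gamma,[\pi_0][\pi_1]\varphi\Rightarrow\Delta$ / $\Gamma,[\pi_0;\pi_1]\varphi\Rightarrow\Delta$; ($[;]$R) $\Gamma\Rightarrow[\pi_0][\pi_1]\varphi,\Delta$ / $\Gamma\Rightarrow[\pi_0;\pi_1]\varphi,\Delta$; ($[\cup]$L) $\Gamma,[\pi_0]\varphi,[\pi_1]\varphi\Rightarrow\Delta$ / $\Gamma,[\pi_0\cup\pi_1]\varphi\Rightarrow\Delta$;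 ($[\cup]$R) $\Gamma\Rightarrow\Delta,[\pi_0]\varphi$ and $\Gamma\Rightarrow\Delta,[\pi_1]\varphi$ / $\Gamma\Rightarrow[\pi_0\cup\pi_1]\varphi,\Delta$; ($[*]$L) $\Gamma,\varphi,[\pi][\pi^*]\varphi\Rightarrow\Delta$ / $\Gamma,[\pi^*]\varphi\Rightarrow\Delta$; ($[?]$L) $\Gamma\Rightarrow\varphi,\Delta$ and $\Gamma,\psi\Rightarrow\Delta$ / $\Gamma,[\varphi?]\psi\Rightarrow\Delta$; ($[?]$R) $\Gamma,\varphi\Rightarrow\psi,\Delta$ / $\Gamma\Rightarrow[\varphi?]\psi,\Delta$; (C-s) $\Gamma\Rightarrow\varphi,\Delta$ and $\Gamma\Rightarrow[\pi][\pi^*]\varphi,\Delta$ / $\Gamma\Rightarrow[\pi^*]\varphi,\Delta$. The principal formula of a rule instance is the distinguished formula introduced in its conclusion. A pre-proof is a pair $(\mathcal D,\mathcal C)$: $\mathcal D$ is a finite tree of sequents in which each inner node with its children is an instance of a rule (conclusion/premises), and each leaf is either an instance of Ax or $\bot$ or a bud; $\mathcal C$ maps each bud to a companion, an inner node labelled by the same sequent. The derivation graph is obtained from $\mathcal D$ by identifying each bud with its companion. A path is a (finite or infinite) sequence of nodes $(\Gamma_i\Rightarrow\Delta_i)_i$ of this graph with each $\Gamma_{i+1}\Rightarrow\Delta_{i+1}$ a premise of the rule instance concluding $\Gamma_i\Rightarrow\Delta_i$. A trace following a path is a sequence of formulas $(\tau_i)$ with $\tau_i\in\Delta_i$ for all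 $i$ such that: if node $i$ concludes ($\to$R) with principal $\varphi\to\psi$, then either $\tau_i=\varphi\to\psi$ and $\tau_{i+1}=\psi$, or $\tau_{i+1}=\tau_i$; if it concludes ($[\,]$) with principal $[\pi]\varphi$ then $\tau_i=[\pi]\varphi$ and $\tau_{i+1}=\varphi$; if ($[\,]^{\leftarrow}$) with principal $[\pi]^{\leftarrow}\varphi$ then $\tau_i=[\pi]^{\leftarrow}\varphi$ and $\tau_{i+1}=\varphi$; if ($[;]$R) with principal $[\pi_0;\pi_1]\varphi$, either $\tau_i$ is it and $\tau_{i+1}=[\pi_0][\pi_1]\varphi$, or $\tau_{i+1}=\tau_i$; if ($[\cup]$R) with principal $[\pi_0\cup\pi_1]\varphi$ and the next node is the premise containing $[\pi_j]\varphi$, either $\tau_i$ is the principal formula and $\tau_{i+1}=[\pi_j]\varphi$, or $\tau_{i+1}=\tau_i$; if ($[?]$R) with principal $[\varphi?]\psi$, either $\tau_i$ is it and $\tau_{i+1}=\psi$, or $\tau_{i+1}=\tau_i$; if (C-s) with principal $[\pi^*]\varphi$ and next node the premise with $\varphi$, either $\tau_i=[\pi^*]\varphi$ and $\tau_{i+1}=\varphi$, or $\tau_{i+1}=\tau_i$; if (C-s) with next node the premise with $[\pi][\pi^*]\varphi$, either $\tau_i=[\pi^*]\varphi$ and $\tau_{i+1}=[\pi][\pi^*]\varphi$ (then $i$ is a progress point), or $\tau_{i+1}=\tau_i$; for every other rule, $\tau_{i+1}=\tau_i$. A trace is infinitely progressing if it has infinitely many progress points. The derivation graph satisfies the global trace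 condition if for every infinite path $(\Gamma_i\Rightarrow\Delta_i)_{i\ge0}$ there is $k$ and an infinitely progressing trace following $(\Gamma_i\Rightarrow\Delta_i)_{i\ge k}$. A $\mathtt{CGTPDL}$ proof of a sequent is a pre-proof with that sequent at the root whose derivation graph satisfies the global trace condition; the sequent is then provable in $\mathtt{CGTPDL}$. *)

(* Defs.v *)
From Stdlib Require Import List Relations Arith.
Import ListNotations.
Set Implicit Arguments.

Section TPDL.
Context (Prp AtProg : Type).

Inductive formula : Type :=
| FBot : formula
| FAtom : Prp -> formula
| FImp : formula -> formula -> formula
| FBox : program -> formula -> formula
| FBoxC : program -> formula -> formula
with program : Type :=
| PAt : AtProg -> program
| PSeq : program -> program -> program
| PUn : program -> program -> program
| PStar : program -> program
| PTest : formula -> program.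

Record model : Type := {
  W : Type;
  W_nonempty : inhabited W;
  Racc : AtProg -> W -> W -> Prop;
  Val : W -> Prp -> Prop
}.

Fixpoint sat (M : model) (f : formula) {struct f} : W M -> Prop :=
  match f with
  | FBot => fun _ => False
  | FAtom p => fun w => Val M w p
  | FImp f g => fun w => sat M f w -> sat M g w
  | FBox pi f => fun w => forall v, rel M pi w v -> sat M f v
  | FBoxC pi f => fun w => forall v, rel M pi v w -> sat M f v
  end
with rel (M : model) (pi : program) {struct pi} : W M -> W M -> Prop :=
  match pi with
  | PAt a => Racc M a
  | PSeq p q => fun w v => exists u, rel M p w u /\ rel M q u v
  | PUn p q => fun w v => rel M p w v \/ rel M q w v
  | PStar p => clos_refl_trans (W M) (rel M p)
  | PTest f => fun w v => w = v /\ sat M f w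
  end.

(** Sequents: pairs of finite sets, represented by lists read as sets *)
Definition sequent : Type := (list formula * list formula)%type.

Definition set_eq (l l' : list formula) : Prop := forall x, In x l <-> In x l'.
Definition seq_eq (s s' : sequent) : Prop := set_eq (fst s) (fst s') /\ set_eq (snd s) (snd s').

Definition valid (M : model) (s : sequent) : Prop :=
  forall w : W M, (forall f, In f (fst s) -> sat M f w) -> exists f, In f (snd s) /\ sat M f w.

Inductive rname : Type :=
| RAx | RBot
| RImpL (f g : formula) | RImpR (f g : formula)
| RWk | RCut (f : formula)
| RBox (pi : program) (f : formula) | RBoxC (pi : program) (f : formula)
| RSeqL (p q : program) (f : formula) | RSeqR (p q : program) (f : formula)
| RUnL (p q : program) (f : formula) | RUnR (p q : program) (f : formula)
| RStarL (p : program) (f : formula)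
| RTestL (f g : formula) | RTestR (f g : formula)
| RCs (p : program) (f : formula).

Definition inst (c : sequent) (ps : list sequent) (C : sequent) (Ps : list sequent) : Prop :=
  seq_eq c C /\ Forall2 seq_eq ps Ps.

Definition rule_inst (r : rname) (c : sequent) (ps : list sequent) : Prop :=
  match r with
  | RAx => ps = [] /\ exists x, In x (fst c) /\ In x (snd c)
  | RBot => ps = [] /\ In FBot (fst c)
  | RImpL f g => exists G D, inst c ps (FImp f g :: G, D) [(G, f :: D); (g :: G, D)]
  | RImpR f g => exists G D, inst c ps (G, FImp f g :: D) [(f :: G, g :: D)]
  | RWk => exists G D, ps = [(G, D)] /\ incl G (fst c) /\ incl D (snd c)
  | RCut f => exists G D, inst c ps (G, D) [(G, f :: D); (f :: G, D)]
  | RBox pi f => exists G D,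
      inst c ps (map (FBox pi) G, FBox pi f :: D) [(G, f :: map (FBoxC pi) D)]
  | RBoxC pi f => exists G D,
      inst c ps (map (FBoxC pi) G, FBoxC pi f :: D) [(G, f :: map (FBox pi) D)]
  | RSeqL p q f => exists G D,
      inst c ps (FBox (PSeq p q) f :: G, D) [(FBox p (FBox q f) :: G, D)]
  | RSeqR p q f => exists G D,
      inst c ps (G, FBox (PSeq p q) f :: D) [(G, FBox p (FBox q f) :: D)]
  | RUnL p q f => exists G D,
      inst c ps (FBox (PUn p q) f :: G, D) [(FBox p f :: FBox q f :: G, D)]
  | RUnR p q f => exists G D,
      inst c ps (G, FBox (PUn p q) f :: D) [(G, FBox p f :: D); (G, FBox q f :: D)]
  | RStarL p f => exists G D,
      inst c ps (FBox (PStar p) f :: G, D) [(f :: FBox p (FBox (PStar p) f) :: G, D)]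
  | RTestL f g => exists G D,
      inst c ps (FBox (PTest f) g :: G, D) [(G, f :: D); (g :: G, D)]
  | RTestR f g => exists G D,
      inst c ps (G, FBox (PTest f) g :: D) [(f :: G, g :: D)]
  | RCs p f => exists G D,
      inst c ps (G, FBox (PStar p) f :: D) [(G, f :: D); (G, FBox p (FBox (PStar p) f) :: D)]
  end.

(** Finite derivation trees: a node carries its sequent and rule (Ax/Bot
    leaves are nodes with no children); buds are leaves without a rule. *)
Inductive ptree : Type :=
| PNode : sequent -> rname -> list ptree -> ptree
| PBud : sequent -> ptree.

Definition label (t : ptree) : sequent :=
  match t with PNode s _ _ => s | PBud s => s end.

Fixpoint subtree_at (t : ptree) (a : list nat) : option ptree :=
  match a with
  | [] => Some t
  | k :: a' =>
      match t with
      | PNode _ _ cs => match nth_error cs k with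
                        | Some c => subtree_at c a'
                        | None => None
                        end
      | PBud _ => None
      end
  end.

(** Pre-proof (t, C): C maps (addresses of) buds to (addresses of) companions *)
Definition preproof (t : ptree) (C : list nat -> list nat) : Prop :=
  (forall a s r cs, subtree_at t a = Some (PNode s r cs) -> rule_inst r s (map label cs)) /\
  (forall a s, subtree_at t a = Some (PBud s) ->
     exists s' r cs, subtree_at t (C a) = Some (PNode s' r cs) /\ cs <> [] /\ seq_eq s' s).

(** Edges of the derivation graph: u --k--> v, v being the k-th premise of
    the rule instance at u, where buds are identified with their companions. *)
Definition edge (t : ptree) (C : list nat -> list nat) (u : list nat) (k : nat) (v : list nat) : Prop :=
  exists s r cs c, subtree_at t u = Some (PNode s r cs) /\ nth_error cs k = Some c /\
    match c with
    | PNode _ _ _ => v = u ++ [k]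
    | PBud _ => v = C (u ++ [k])
    end.

Definition trace_step (r : rname) (k : nat) (a b : formula) : Prop :=
  match r with
  | RImpR f g => (a = FImp f g /\ b = g) \/ b = a
  | RBox pi f => a = FBox pi f /\ b = f
  | RBoxC pi f => a = FBoxC pi f /\ b = f
  | RSeqR p q f => (a = FBox (PSeq p q) f /\ b = FBox p (FBox q f)) \/ b = a
  | RUnR p q f =>
      (a = FBox (PUn p q) f /\ b = FBox (if Nat.eqb k 0 then p else q) f) \/ b = a
  | RTestR f g => (a = FBox (PTest f) g /\ b = g) \/ b = a
  | RCs p f =>
      if Nat.eqb k 0 then (a = FBox (PStar p) f /\ b = f) \/ b = a
      else (a = FBox (PStar p) f /\ b = FBox p (FBox (PStar p) f)) \/ b = a
  | _ => b = a
  end.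

Definition progress_step (r : rname) (k : nat) (a b : formula) : Prop :=
  match r with
  | RCs p f => k = 1 /\ a = FBox (PStar p) f /\ b = FBox p (FBox (PStar p) f)
  | _ => False
  end.

Definition trace_at (t : ptree) (u : list nat) (k : nat) (a b : formula) : Prop :=
  exists s r cs, subtree_at t u = Some (PNode s r cs) /\ In a (snd s) /\ trace_step r k a b.

Definition progress_at (t : ptree) (u : list nat) (k : nat) (a b : formula) : Prop :=
  exists s r cs, subtree_at t u = Some (PNode s r cs) /\ progress_step r k a b.

Definition global_trace_condition (t : ptree) (C : list nat -> list nat) : Prop :=
  forall (p : nat -> list nat) (ks : nat -> nat),
    (forall i, edge t C (p i) (ks i) (p (S i))) ->
    exists (n : nat) (tau : nat -> formula),
      (forall i, trace_at t (p (n + i)) (ks (n + i)) (tau i) (tau (S i))) /\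
      (forall m, exists j, m <= j /\ progress_at t (p (n + j)) (ks (n + j)) (tau j) (tau (S j))).

Definition CGTPDL_provable (s : sequent) : Prop :=
  exists (t : ptree) (C : list nat -> list nat),
    preproof t C /\ seq_eq (label t) s /\ global_trace_condition t C.

End TPDL.

(* Main.v *)
Require Import Defs.
From Stdlib Require Import List Relations Arith Lia Classical ClassicalEpsilon.
Import ListNotations.

Section Sound.
Context {Prp AtProg : Type} (M : model Prp AtProg).
Notation fm := (formula Prp AtProg).
Notation pg := (program Prp AtProg).

Inductive Pc : pg -> W M -> W M -> nat -> Prop :=
| Pc_at a w v : Racc M a w v -> Pc (PAt Prp a) w v 0
| Pc_seq p q w u v c1 c2 : Pc p w u c1 -> Pc q u v c2 -> Pc (PSeq p q) w v (c1 + c2)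
| Pc_unl p q w v c : Pc p w v c -> Pc (PUn p q) w v c
| Pc_unr p q w v c : Pc q w v c -> Pc (PUn p q) w v c
| Pc_refl p w : Pc (PStar p) w w 0
| Pc_step p w u v c1 c2 : Pc p w u c1 -> Pc (PStar p) u v c2 -> Pc (PStar p) w v (S (c1 + c2))
| Pc_test f w : sat M f w -> Pc (PTest f) w w 0.

Inductive Fc : fm -> W M -> nat -> Prop :=
| Fc_bot w : Fc (@FBot Prp AtProg) w 0
| Fc_atom p w : ~ Val M w p -> Fc (FAtom AtProg p) w 0
| Fc_imp f g w n : sat M f w -> Fc g w n -> Fc (FImp f g) w n
| Fc_box pi f w v c n : Pc pi w v c -> Fc f v n -> Fc (FBox pi f) w (c + n)
| Fc_boxc pi f w v c n : Pc pi v w c -> Fc f v n -> Fc (FBoxC pi f) w (c + n).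

Lemma Pc_rel pi w v c : Pc pi w v c -> rel M pi w v.
Proof.
  induction 1; simpl.
  - auto.
  - exists u; auto.
  - left; auto.
  - right; auto.
  - apply rt_refl.
  - eapply rt_trans; [apply rt_step|]; eauto.
  - auto.
Qed.

Lemma rel_Pc pi : forall w v, rel M pi w v -> exists c, Pc pi w v c.
Proof.
  induction pi as [a|p IHp q IHq|p IHp q IHq|p IHp|f]; simpl; intros w v H.
  - exists 0; constructor; auto.
  - destruct H as (u&H1&H2). destruct (IHp _ _ H1) as [c1 ?]; destruct (IHq _ _ H2) as [c2 ?].
    eexists; econstructor; eauto.
  - destruct H as [H|H]; [destruct (IHp _ _ H) | destruct (IHq _ _ H)]; eexists;
      [apply Pc_unl|apply Pc_unr]; eauto.
  - apply clos_rt_rt1n in H. induction H.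
    + eexists; apply Pc_refl.
    + destruct (IHp _ _ H) as [c1 ?]. destruct IHclos_refl_trans_1n as [c2 ?].
      eexists; eapply Pc_step; eauto.
  - destruct H as [<- H]. eexists; constructor; auto.
Qed.

Lemma Fc_sat f w n : Fc f w n -> ~ sat M f w.
Proof.
  induction 1; simpl; auto; intros H'; apply IHFc; auto; apply H'; eapply Pc_rel; eauto.
Qed.

Lemma sat_Fc f : forall w, ~ sat M f w -> exists n, Fc f w n.
Proof.
  induction f as [|a|f1 IH1 f2 IH2|pi f IH|pi f IH]; simpl; intros w H.
  - exists 0; constructor.
  - exists 0; constructor; auto.
  - apply imply_to_and in H as [H1 H2]. destruct (IH2 _ H2) as [n ?].
    exists n; constructor; auto.
  - apply not_all_ex_not in H as [v H]. apply imply_to_and in H as [H1 H2].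
    destruct (rel_Pc _ _ _ H1) as [c ?]. destruct (IH _ H2) as [n ?].
    eexists; econstructor; eauto.
  - apply not_all_ex_not in H as [v H]. apply imply_to_and in H as [H1 H2].
    destruct (rel_Pc _ _ _ H1) as [c ?]. destruct (IH _ H2) as [n ?].
    eexists; econstructor; eauto.
Qed.

Lemma nat_min (Q : nat -> Prop) n : Q n -> exists m, Q m /\ forall k, Q k -> m <= k.
Proof.
  induction n as [n IH] using (well_founded_induction lt_wf). intros Hn.
  destruct (classic (exists k, k < n /\ Q k)) as [[k [Hk HQ]]|Hno].
  - exact (IH k Hk HQ).
  - exists n; split; auto. intros k Hk. destruct (Nat.lt_ge_cases k n); auto.
    exfalso; eauto.
Qed.

Lemma minF f w : ~ sat M f w -> exists m, Fc f w m /\ forall k, Fc f w k -> m <= k.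
Proof. intros H. destruct (sat_Fc _ _ H) as [n Hn]. exact (nat_min _ _ Hn). Qed.

Definition fals w (s : sequent Prp AtProg) :=
  (forall f, In f (fst s) -> sat M f w) /\ (forall f, In f (snd s) -> ~ sat M f w).
Definition Qle f w N := exists n, n <= N /\ Fc f w n.
Definition TC r k w w' := forall a b N, trace_step r k a b -> Qle a w N -> Qle b w' N.
Definition PC r k w w' := forall (a b : fm) N, progress_step r k a b -> Qle a w N -> exists N', N' < N /\ Qle b w' N'.

Lemma fals_eq w s s' : seq_eq s s' -> fals w s -> fals w s'.
Proof. intros [H1 H2] [F1 F2]; split; intros f Hf; [apply F1, H1|apply F2, H2]; auto. Qed.
Lemma fals_eq' w s s' : seq_eq s s' -> fals w s' -> fals w s.
Proof. intros [H1 H2] [F1 F2]; split; intros f Hf; [apply F1, H1|apply F2, H2]; auto. Qed.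

Lemma pick_prem ps Ps k P w : Forall2 (@seq_eq Prp AtProg) ps Ps -> nth_error Ps k = Some P -> fals w P ->
  exists s', nth_error ps k = Some s' /\ fals w s'.
Proof.
  intros H; revert k; induction H; intros k Hk HP; destruct k; simpl in *; try discriminate.
  - inversion Hk; subst. exists x; split; auto. eapply fals_eq'; eauto.
  - eauto.
Qed.

Lemma use_inst r c ps C Ps w : inst c ps C Ps -> fals w c ->
  (fals w C -> exists k P w', nth_error Ps k = Some P /\ fals w' P /\ TC r k w w' /\ PC r k w w') ->
  exists k s' w', nth_error ps k = Some s' /\ fals w' s' /\ TC r k w w' /\ PC r k w w'.
Proof.
  intros [Hc Hps] Hf H. destruct (H (fals_eq _ _ _ Hc Hf)) as (k&P&w'&Hk&HP&HT&HPc).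
  destruct (pick_prem _ _ _ _ _ Hps Hk HP) as (s'&?&?). eauto 10.
Qed.


Lemma Pc_star_inv p w v c : Pc (PStar p) w v c -> (v = w /\ c = 0) \/ exists u c1 c2, Pc p w u c1 /\ Pc (PStar p) u v c2 /\ c = S (c1+c2).
Proof. intros H; inversion H; subst; [left|right]; eauto 10. Qed.
Lemma Pc_un_inv p q w v c : Pc (PUn p q) w v c -> Pc p w v c \/ Pc q w v c.
Proof. intros H; inversion H; subst; auto. Qed.
Lemma Pc_seq_inv p q w v c : Pc (PSeq p q) w v c -> exists u c1 c2, Pc p w u c1 /\ Pc q u v c2 /\ c = c1 + c2.
Proof. intros H; inversion H; subst; eauto 10. Qed.
Lemma Pc_test_inv f w v c : Pc (PTest f) w v c -> v = w /\ c = 0 /\ sat M f w.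
Proof. intros H; inversion H; subst; auto. Qed.
Lemma Fc_box_inv pi f w m : Fc (FBox pi f) w m -> exists v c n, Pc pi w v c /\ Fc f v n /\ m = c + n.
Proof. intros H; inversion H; subst; eauto 10. Qed.
Lemma Fc_boxc_inv pi f w m : Fc (FBoxC pi f) w m -> exists v c n, Pc pi v w c /\ Fc f v n /\ m = c + n.
Proof. intros H; inversion H; subst; eauto 10. Qed.
Lemma Fc_imp_inv f g w m : Fc (FImp f g) w m -> sat M f w /\ Fc g w m.
Proof. intros H; inversion H; subst; auto. Qed.

Lemma Fc_seq p q f w n : Fc (FBox (PSeq p q) f) w n -> Fc (FBox p (FBox q f)) w n.
Proof.
  intros H. apply Fc_box_inv in H as (v&c&n0&H1&H2&->).
  apply Pc_seq_inv in H1 as (u&c1&c2&H3&H4&->).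
  replace (c1 + c2 + n0) with (c1 + (c2 + n0)) by lia.
  econstructor; eauto. econstructor; eauto.
Qed.

Lemma Fc_test f g w n : Fc (FBox (PTest f) g) w n -> sat M f w /\ Fc g w n.
Proof.
  intros H. apply Fc_box_inv in H as (v&c&n0&H1&H2&->).
  apply Pc_test_inv in H1 as (->&->&H3). auto.
Qed.

Ltac triv := split; [intros ? ? ? Hts HQ; simpl in Hts; subst; exact HQ
                    | intros ? ? ? Hps _; simpl in Hps; contradiction].
Ltac sf HL HR := split; simpl; intros x Hx; repeat (destruct Hx as [<-|Hx]);
  try (apply HL; simpl; tauto); try (apply HR; simpl; tauto); try assumption.

Lemma step_rule r s ps w : rule_inst r s ps -> fals w s ->
  exists k s' w', nth_error ps k = Some s' /\ fals w' s' /\ TC r k w w' /\ PC r k w w'.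
Proof.
  intros Hr Hf. destruct r; simpl in Hr.
  - destruct Hr as [_ (x&H1&H2)]. exfalso. destruct Hf as [F1 F2].
    exact (F2 x H2 (F1 x H1)).
  - destruct Hr as [_ H]. exfalso. exact (proj1 Hf _ H).
  - destruct Hr as (G&D&Hi). eapply use_inst; [exact Hi|exact Hf|].
    intros [HL HR]; simpl in HL, HR.
    assert (Himp := HL _ (or_introl eq_refl)); simpl in Himp.
    destruct (classic (sat M f w)) as [Hfw|Hfw].
    + exists 1, (g :: G, D), w. split; [reflexivity|]. split; [sf HL HR; auto|triv].
    + exists 0, (G, f :: D), w. split; [reflexivity|]. split; [sf HL HR|triv].
  - destruct Hr as (G&D&Hi). eapply use_inst; [exact Hi|exact Hf|].
    intros [HL HR]; simpl in HL, HR.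
    assert (Himp := HR _ (or_introl eq_refl)); simpl in Himp.
    apply imply_to_and in Himp as [H1 H2].
    exists 0, (f :: G, g :: D), w. split; [reflexivity|]. split; [sf HL HR|].
    split.
    + intros a b N Hts HQ; simpl in Hts. destruct Hts as [[-> ->]| ->]; auto.
      destruct HQ as (n&?&HF). apply Fc_imp_inv in HF as [_ HF]. exists n; auto.
    + intros ? ? ? Hps _; simpl in Hps; contradiction.
  - destruct Hr as (G&D&->&H1&H2). exists 0, (G, D), w. split; [reflexivity|].
    split; [|triv]. destruct Hf as [F1 F2]; split; simpl; intros x Hx; auto.
  - destruct Hr as (G&D&Hi). eapply use_inst; [exact Hi|exact Hf|].
    intros [HL HR]; simpl in HL, HR.
    destruct (classic (sat M f w)) as [Hfw|Hfw].
    + exists 1, (f :: G, D), w. split; [reflexivity|]. split; [sf HL HR|triv].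
    + exists 0, (G, f :: D), w. split; [reflexivity|]. split; [sf HL HR|triv].
  - destruct Hr as (G&D&Hi). eapply use_inst; [exact Hi|exact Hf|].
    intros [HL HR]; simpl in HL, HR.
    destruct (minF _ _ (HR _ (or_introl eq_refl))) as (m&Hm&Hmin).
    pose proof Hm as Hm'. apply Fc_box_inv in Hm' as (v&c&n&H1&H2&Hmeq).
    exists 0, (G, f :: map (FBoxC pi) D), v. split; [reflexivity|]. split; [|split].
    + split; simpl.
      * intros x Hx. exact (HL (FBox pi x) (in_map _ _ _ Hx) v (Pc_rel _ _ _ _ H1)).
      * intros x [<-|Hx]. { eapply Fc_sat; eauto. }
        apply in_map_iff in Hx as (d&<-&Hd). simpl. intros Hs.
        apply (HR d (or_intror Hd)). apply Hs. eapply Pc_rel; eauto.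
    + intros a b N [-> ->] (n0&Hn0&HF). exists n; split; auto.
      specialize (Hmin _ HF). lia.
    + intros ? ? ? Hps _; simpl in Hps; contradiction.
  - destruct Hr as (G&D&Hi). eapply use_inst; [exact Hi|exact Hf|].
    intros [HL HR]; simpl in HL, HR.
    destruct (minF _ _ (HR _ (or_introl eq_refl))) as (m&Hm&Hmin).
    pose proof Hm as Hm'. apply Fc_boxc_inv in Hm' as (v&c&n&H1&H2&Hmeq).
    exists 0, (G, f :: map (FBox pi) D), v. split; [reflexivity|]. split; [|split].
    + split; simpl.
      * intros x Hx. exact (HL (FBoxC pi x) (in_map _ _ _ Hx) v (Pc_rel _ _ _ _ H1)).
      * intros x [<-|Hx]. { eapply Fc_sat; eauto. }
        apply in_map_iff in Hx as (d&<-&Hd). simpl. intros Hs.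
        apply (HR d (or_intror Hd)). apply Hs. eapply Pc_rel; eauto.
    + intros a b N [-> ->] (n0&Hn0&HF). exists n; split; auto.
      specialize (Hmin _ HF). lia.
    + intros ? ? ? Hps _; simpl in Hps; contradiction.
  - destruct Hr as (G&D&Hi). eapply use_inst; [exact Hi|exact Hf|].
    intros [HL HR]; simpl in HL, HR.
    assert (H := HL _ (or_introl eq_refl)); simpl in H.
    exists 0, (FBox p (FBox q f) :: G, D), w. split; [reflexivity|]. split; [sf HL HR|triv].
    simpl; intros u Hu v Hv; apply H; exists u; auto.
  - destruct Hr as (G&D&Hi). eapply use_inst; [exact Hi|exact Hf|].
    intros [HL HR]; simpl in HL, HR.
    destruct (sat_Fc _ _ (HR _ (or_introl eq_refl))) as (m&Hm).
    exists 0, (G, FBox p (FBox q f) :: D), w. split; [reflexivity|]. split; [sf HL HR|].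
    { eapply Fc_sat, Fc_seq; eauto. }
    split.
    + intros a b N Hts HQ; simpl in Hts. destruct Hts as [[-> ->]| ->]; auto.
      destruct HQ as (n&?&HF). exists n; split; auto. apply Fc_seq; auto.
    + intros ? ? ? Hps _; simpl in Hps; contradiction.
  - destruct Hr as (G&D&Hi). eapply use_inst; [exact Hi|exact Hf|].
    intros [HL HR]; simpl in HL, HR.
    assert (H := HL _ (or_introl eq_refl)); simpl in H.
    exists 0, (FBox p f :: FBox q f :: G, D), w. split; [reflexivity|]. split; [sf HL HR|triv].
    + simpl; intros v Hv; apply H; auto.
    + simpl; intros v Hv; apply H; auto.
  - destruct Hr as (G&D&Hi). eapply use_inst; [exact Hi|exact Hf|].
    intros [HL HR]; simpl in HL, HR.
    destruct (minF _ _ (HR _ (or_introl eq_refl))) as (m&Hm&Hmin).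
    pose proof Hm as Hm'. apply Fc_box_inv in Hm' as (v&c&n&H1&H2&Hmeq).
    apply Pc_un_inv in H1 as [H1|H1].
    + exists 0, (G, FBox p f :: D), w. split; [reflexivity|]. split; [sf HL HR|split].
      { eapply Fc_sat. econstructor; eauto. }
      * intros a b N Hts HQ; simpl in Hts. destruct Hts as [[-> ->]| ->]; auto.
        destruct HQ as (n0&?&HF). specialize (Hmin _ HF). exists (c + n); split; [lia|].
        econstructor; eauto.
      * intros ? ? ? Hps _; simpl in Hps; contradiction.
    + exists 1, (G, FBox q f :: D), w. split; [reflexivity|]. split; [sf HL HR|split].
      { eapply Fc_sat. econstructor; eauto. }
      * intros a b N Hts HQ; simpl in Hts. destruct Hts as [[-> ->]| ->]; auto.
        destruct HQ as (n0&?&HF). specialize (Hmin _ HF). exists (c + n); split; [lia|].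
        econstructor; eauto.
      * intros ? ? ? Hps _; simpl in Hps; contradiction.
  - destruct Hr as (G&D&Hi). eapply use_inst; [exact Hi|exact Hf|].
    intros [HL HR]; simpl in HL, HR.
    assert (H := HL _ (or_introl eq_refl)); simpl in H.
    exists 0, (f :: FBox p (FBox (PStar p) f) :: G, D), w. split; [reflexivity|]. split; [sf HL HR|triv].
    + apply H, rt_refl.
    + simpl; intros u Hu v Hv; apply H. eapply rt_trans; [apply rt_step|]; eauto.
  - destruct Hr as (G&D&Hi). eapply use_inst; [exact Hi|exact Hf|].
    intros [HL HR]; simpl in HL, HR.
    assert (H := HL _ (or_introl eq_refl)); simpl in H.
    destruct (classic (sat M f w)) as [Hfw|Hfw].
    + exists 1, (g :: G, D), w. split; [reflexivity|]. split; [sf HL HR|triv].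
      apply H; auto.
    + exists 0, (G, f :: D), w. split; [reflexivity|]. split; [sf HL HR|triv].
  - destruct Hr as (G&D&Hi). eapply use_inst; [exact Hi|exact Hf|].
    intros [HL HR]; simpl in HL, HR.
    destruct (sat_Fc _ _ (HR _ (or_introl eq_refl))) as (m&Hm).
    apply Fc_test in Hm as [H1 H2].
    exists 0, (f :: G, g :: D), w. split; [reflexivity|]. split; [sf HL HR|].
    { eapply Fc_sat; eauto. }
    split.
    + intros a b N Hts HQ; simpl in Hts. destruct Hts as [[-> ->]| ->]; auto.
      destruct HQ as (n&?&HF). exists n; split; auto. apply Fc_test in HF; tauto.
    + intros ? ? ? Hps _; simpl in Hps; contradiction.
  - destruct Hr as (G&D&Hi). eapply use_inst; [exact Hi|exact Hf|].
    intros [HL HR]; simpl in HL, HR.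
    destruct (minF _ _ (HR _ (or_introl eq_refl))) as (m&Hm&Hmin).
    pose proof Hm as Hm'. apply Fc_box_inv in Hm' as (v&c&n&H1&H2&Hmeq).
    apply Pc_star_inv in H1 as [[-> ->]|(u&c1&c2&H3&H4&->)].
    + exists 0, (G, f :: D), w. split; [reflexivity|]. split; [sf HL HR|split].
      { eapply Fc_sat; eauto. }
      * intros a b N Hts HQ; simpl in Hts. destruct Hts as [[-> ->]| ->]; auto.
        destruct HQ as (n0&?&HF). specialize (Hmin _ HF). exists n; split; [lia|auto].
      * intros ? ? ? Hps _; simpl in Hps. destruct Hps; discriminate.
    + assert (HF1 : Fc (FBox p (FBox (PStar p) f)) w (c1 + (c2 + n))).
      { econstructor; eauto. econstructor; eauto. }
      exists 1, (G, FBox p (FBox (PStar p) f) :: D), w. split; [reflexivity|]. split; [sf HL HR|split].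
      { eapply Fc_sat; eauto. }
      * intros a b N Hts HQ; simpl in Hts. destruct Hts as [[-> ->]| ->]; auto.
        destruct HQ as (n0&?&HF). specialize (Hmin _ HF). exists (c1 + (c2 + n)); split; [lia|auto].
      * intros a b N Hps HQ; simpl in Hps. destruct Hps as (_&->&->).
        destruct HQ as (n0&?&HF). specialize (Hmin _ HF).
        exists (c1 + (c2 + n)); split; [lia|]. exists (c1 + (c2 + n)); auto.
Qed.

End Sound.

Lemma subtree_app {Prp AtProg} (t : ptree Prp AtProg) u a :
  subtree_at t (u ++ a) = match subtree_at t u with Some t' => subtree_at t' a | None => None end.
Proof.
  revert t; induction u as [|k u IH]; intros t; simpl; auto.
  destruct t as [s r cs|s]; auto. destruct (nth_error cs k); auto.
Qed.

Section Main.
Context {Prp AtProg : Type} (M : model Prp AtProg) (t : ptree Prp AtProg)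
  (C : list nat -> list nat) (Hpre : preproof t C).

Definition good (x : list nat * W M) := exists s r cs,
  subtree_at t (fst x) = Some (PNode s r cs) /\ fals M (snd x) s.
Definition stp (x : list nat * W M) k (y : list nat * W M) :=
  edge t C (fst x) k (fst y) /\ good y /\
  forall s r cs, subtree_at t (fst x) = Some (PNode s r cs) ->
    TC M r k (snd x) (snd y) /\ PC M r k (snd x) (snd y).

Lemma good_step x : good x -> exists k y, stp x k y.
Proof.
  destruct x as [u w]; intros (s&r&cs&Hs&Hf); simpl in *.
  pose proof (proj1 Hpre _ _ _ _ Hs) as Hr.
  destruct (step_rule M _ _ _ _ Hr Hf) as (k&s'&w'&Hk&Hf'&HT&HP).
  rewrite nth_error_map in Hk.
  destruct (nth_error cs k) as [c|] eqn:Hc; simpl in Hk; inversion Hk; subst.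
  assert (Hsub : subtree_at t (u ++ [k]) = Some c).
  { rewrite subtree_app, Hs; simpl; rewrite Hc; auto. }
  destruct c as [s1 r1 cs1|s1].
  - exists k, (u ++ [k], w'). split; [exists s, r, cs, (PNode s1 r1 cs1); auto|].
    split; [exists s1, r1, cs1; auto|].
    intros s0 r0 cs0 Hs0; simpl in Hs0; rewrite Hs in Hs0; inversion Hs0; subst; auto.
  - destruct (proj2 Hpre _ _ Hsub) as (s2&r2&cs2&H1&_&Heq).
    exists k, (C (u ++ [k]), w'). split; [exists s, r, cs, (PBud s1); auto|].
    split; [exists s2, r2, cs2; split; auto; eapply fals_eq'; eauto|].
    intros s0 r0 cs0 Hs0; simpl in Hs0; rewrite Hs in Hs0; inversion Hs0; subst; auto.
Qed.

Definition nxt (x : list nat * W M) : nat * (list nat * W M) :=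
  epsilon (inhabits (0, x)) (fun ky => good x -> stp x (fst ky) (snd ky)).

Lemma nxt_spec x : good x -> stp x (fst (nxt x)) (snd (nxt x)).
Proof.
  intros H. unfold nxt.
  apply (epsilon_spec (inhabits (0, x)) (fun ky => good x -> stp x (fst ky) (snd ky))); auto.
  destruct (good_step x H) as (k&y&?). exists (k, y); auto.
Qed.

Fixpoint seqf x0 i := match i with 0 => x0 | S i => snd (nxt (seqf x0 i)) end.

Lemma seqf_good x0 : good x0 -> forall i, good (seqf x0 i).
Proof. intros H i; induction i; simpl; auto. apply nxt_spec; auto. Qed.

Lemma no_gtc x0 : good x0 -> global_trace_condition t C -> False.
Proof.
  intros Hx0 Hg.
  set (p := fun i => fst (seqf x0 i)). set (ks := fun i => fst (nxt (seqf x0 i))).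
  assert (Hst : forall i, stp (seqf x0 i) (ks i) (seqf x0 (S i))).
  { intros i. apply nxt_spec, seqf_good; auto. }
  destruct (Hg p ks) as (n&tau&Htr&Hprog).
  { intros i. exact (proj1 (Hst i)). }
  set (Q := fun i N => Qle M (tau i) (snd (seqf x0 (n + i))) N).
  assert (Hmono : forall i N, Q i N -> Q (S i) N).
  { intros i N HQ. destruct (Htr i) as (s&r&cs&Hs&_&Hts).
    destruct (proj2 (proj2 (Hst (n + i))) s r cs Hs) as [HT _].
    unfold Q. rewrite Nat.add_succ_r. eapply HT; eauto. }
  assert (Hmono' : forall d i N, Q i N -> Q (d + i) N).
  { induction d; simpl; auto. }
  assert (Hstr : forall j N, progress_at t (p (n + j)) (ks (n + j)) (tau j) (tau (S j)) ->
     Q j N -> exists N', N' < N /\ Q (S j) N').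
  { intros j N (s&r&cs&Hs&Hps) HQ.
    destruct (proj2 (proj2 (Hst (n + j))) s r cs Hs) as [_ HP].
    unfold Q. rewrite Nat.add_succ_r. eapply HP; eauto. }
  assert (Hinit : exists N, Q 0 N).
  { destruct (Htr 0) as (s&r&cs&Hs&Hin&_).
    destruct (seqf_good x0 Hx0 (n + 0)) as (s'&r'&cs'&Hs'&Hf).
    unfold p in Hs. rewrite Hs in Hs'. inversion Hs'; subst.
    destruct (sat_Fc M _ _ (proj2 Hf _ Hin)) as (m&Hm). exists m, m; auto. }
  destruct Hinit as [N0 H0].
  assert (Hall : forall N i, Q i N -> False).
  { intros N. induction N as [N IH] using (well_founded_induction lt_wf).
    intros i HQ. destruct (Hprog i) as (j&Hij&Hpj).
    assert (HQj : Q j N).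
    { replace j with ((j - i) + i) by lia. apply Hmono'; auto. }
    destruct (Hstr j N Hpj HQj) as (N'&HN'&HQ'). eapply IH; eauto. }
  eauto.
Qed.

End Main.

Theorem mainTheorem5 (Prp AtProg : Type) (Gamma Delta : list (formula Prp AtProg)) :
  CGTPDL_provable (Gamma, Delta) -> forall M : model Prp AtProg, valid M (Gamma, Delta).
Proof.
  intros (t&C&Hpre&Hlab&Hg) M w HG. apply NNPP; intros Hno.
  assert (Hf : fals M w (Gamma, Delta)).
  { split; simpl; auto. intros f Hf Hs; apply Hno; eauto. }
  apply (fals_eq' M _ _ _ Hlab) in Hf.
  destruct t as [s r cs|s] eqn:Ht.
  - apply (no_gtc M _ C Hpre ([], w)); auto. exists s, r, cs; auto.
  - destruct (proj2 Hpre [] s eq_refl) as (s2&r2&cs2&H1&_&Heq).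
    apply (no_gtc M _ C Hpre (C [], w)); auto. exists s2, r2, cs2; split; auto.
    eapply fals_eq'; eauto.
Qed.
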